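(* Let $p>p_0\ge1$ and $M$ be integers with $p_0\le M\le p$, let $f_n\in C[0,1]^p$, and suppose there exist $\widetilde f_n\in C[0,1]^{p_0}$ and $\eta_n>0$ with $\sup_{\mathbf{x}\in[0,1]^p}|f_n(\mathbf{x})-\widetilde f_n(x_1,\ldots,x_{p_0})|<\eta_n$, and a positive constant $\tau$ with $|\int_{[0,1]^p}x_jf_n(\mathbf{x})d\mathbf{x}-\frac12\int_{[0,1]^p}f_n(\mathbf{x})d\mathbf{x}|>\tau$ for each $j=1,\ldots,p_0$. Then for every $\mathcal{A}_1\subset Z_p$ with $|\mathcal{A}_1|=M$ and $\mathcal{A}_0\setminus\mathcal{A}_1\ne\emptyset$, $$\int_{[0,1]^p}\left(f_n(\mathbf{x})-\beta_0(\mathcal{A}_1)-\boldsymbol\beta_{Z_p}(\mathcal{A}_1)'\mathbf{x}\right)^2d\mathbf{x}-\int_{[0,1]^p}\left(f_n(\mathbf{x})-\beta_0(\mathcal{A}_0)-\boldsymbol\beta_{Z_p}(\mathcal{A}_0)'\mathbf{x}\right)^2d\mathbf{x}\ge12\tau^2-12(M-p_0+1)\eta_n^2.$$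
   Context: $Z_d=\{1,\ldots,d\}$, $\mathcal{A}_0=Z_{p_0}$. For $\mathcal{A}\subset Z_p$ and $\mathbf{x}\in[0,1]^p$, $\mathbf{x}_{\mathcal{A}}$ is the subvector of coordinates in $\mathcal{A}$. $(\beta_0(\mathcal{A}),\boldsymbol\beta(\mathcal{A})')'\in\mathbb{R}\times\mathbb{R}^{|\mathcal{A}|}$ minimizes $\int_{[0,1]^p}[f_n(\mathbf{x})-\phi_0-\boldsymbol\phi'\mathbf{x}_{\mathcal{A}}]^2d\mathbf{x}$ over $(\phi_0,\boldsymbol\phi)$, and $\boldsymbol\beta_{Z_p}(\mathcal{A})\in\mathbb{R}^p$ equals $\boldsymbol\beta(\mathcal{A})$ on coordinates in $\mathcal{A}$ and $0$ elsewhere. *)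

(* Defs.v *)
From HB Require Import structures.
From mathcomp Require Import all_boot all_order all_algebra.
From mathcomp Require Import all_classical all_reals all_analysis.
Set Implicit Arguments. Unset Strict Implicit. Unset Printing Implicit Defensive.
Import Order.TTheory GRing.Theory Num.Theory.
Import numFieldNormedType.Exports.
Local Open Scope classical_set_scope.
Local Open Scope ring_scope.

Definition cube {R : realType} (p : nat) : set 'rV[R]_p :=
  [set x | forall i : 'I_p, 0 <= x ord0 i <= 1].

Arguments cube {R} p _.

(* Iterated integral over [0,1]^n of a function of a sequence of reals
   (coordinates 0..n-1 are integrated, innermost = coordinate 0). *)
Fixpoint cube_int_seq {R : realType} (n : nat) (F : (nat -> R) -> R) : R :=
  match n with
  | 0 => F (fun _ => 0)
  | k.+1 => Rintegral (@lebesgue_measure R) `[0%R, 1%R]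
              (fun t : R => cube_int_seq k
                 (fun x => F (fun j => if j == k then t else x j)))
  end.

(* Integral over [0,1]^p (as an iterated Lebesgue integral; for continuous
   integrands this is the p-dimensional integral by Fubini). *)
Definition cube_int {R : realType} (p : nat) (f : 'rV[R]_p -> R) : R :=
  cube_int_seq p (fun x => f (\row_(i < p) x (nat_of_ord i))).

Definition ls_loss {R : realType} (p : nat) (f : 'rV[R]_p -> R)
  (c0 : R) (c : 'rV[R]_p) : R :=
  cube_int (fun x => (f x - c0 - \sum_(i < p) c ord0 i * x ord0 i) ^+ 2).

(* (b0, b) = (beta_0(A), beta_{Z_p}(A)): b vanishes off A and (b0, b|_A)
   minimises the L2 loss among all (c0, c) with c supported on A. *)
Definition ls_fit {R : realType} (p : nat) (f : 'rV[R]_p -> R)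
  (A : {set 'I_p}) (b0 : R) (b : 'rV[R]_p) : Prop :=
  (forall i, i \notin A -> b ord0 i = 0) /\
  (forall (c0 : R) (c : 'rV[R]_p), (forall i, i \notin A -> c ord0 i = 0) ->
     ls_loss f b0 b <= ls_loss f c0 c).

(* A_0 = Z_{p0} = {1,...,p0} (0-based: indices i < p0) as a subset of Z_p. *)
Definition Zset (p p0 : nat) : {set 'I_p} := [set i : 'I_p | (i < p0)%N].

(* Main.v *)
Require Import Defs.
From HB Require Import structures.
From mathcomp Require Import all_boot all_order all_algebra.
From mathcomp Require Import all_classical all_reals all_analysis.
From mathcomp Require Import ring lra.
Import Order.TTheory GRing.Theory Num.Theory.
Import numFieldNormedType.Exports.
Local Open Scope classical_set_scope.
Local Open Scope ring_scope.
Definition Dn {R : realType} n (x : nat -> R) := forall j, (j < n)%N -> 0 <= x j <= 1.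
Definition good {R : realType} n (F : (nat -> R) -> R) :=
  (exists B : R, forall x, Dn n x -> `|F x| <= B) /\
  (forall e : R, 0 < e -> exists2 d : R, 0 < d & forall x y, Dn n x -> Dn n y ->
     (forall j, (j < n)%N -> `|x j - y j| < d) -> `|F x - F y| < e).
Definition upd {R : realType} (k : nat) (t : R) (x : nat -> R) : nat -> R :=
  fun j => if j == k then t else x j.

Lemma good_cst {R : realType} n (c : R) : good n (fun _ => c).
Proof.
split; first by exists `|c|.
by move=> e e0; exists 1 => // x y _ _ _; rewrite subrr normr0.
Qed.

Lemma good_coord {R : realType} n j : (j < n)%N -> good n (fun x : nat -> R => x j).
Proof.
move=> jn; split.
  by exists 1 => x /(_ j jn) /andP[h0 h1]; rewrite ger0_norm.
by move=> e e0; exists e => // x y _ _ /(_ j jn).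
Qed.

Lemma good_lin {R : realType} n (a : R) F G : good n F -> good n G ->
  good n (fun x => a * F x + G x).
Proof.
move=> [[B1 hB1] cF] [[B2 hB2] cG]; split.
  exists (`|a| * B1 + B2) => x Dx.
  apply: (le_trans (ler_normD _ _)); rewrite normrM.
  have := hB1 x Dx; have := hB2 x Dx; have := normr_ge0 a; nra.
move=> e e0.
have a1 : 0 < `|a| + 1 by rewrite ltr_pwDr.
have e2 : 0 < e / 2 by rewrite divr_gt0.
have [d1 d10 h1] := cF (e / 2 / (`|a| + 1)) (divr_gt0 e2 a1).
have [d2 d20 h2] := cG (e / 2) e2.
exists (Num.min d1 d2); first by rewrite lt_min d10 d20.
move=> x y Dx Dy cxy.
have c1 : forall j, (j < n)%N -> `|x j - y j| < d1.
  by move=> j jn; have := cxy j jn; rewrite lt_min => /andP[].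
have c2 : forall j, (j < n)%N -> `|x j - y j| < d2.
  by move=> j jn; have := cxy j jn; rewrite lt_min => /andP[].
have := h1 _ _ Dx Dy c1; have := h2 _ _ Dx Dy c2.
set u := F x - F y; set v := G x - G y => hv hu.
have -> : a * F x + G x - (a * F y + G y) = a * u + v by rewrite /u /v; ring.
apply: (le_lt_trans (ler_normD _ _)); rewrite normrM.
rewrite ltr_pdivlMr // in hu.
have := normr_ge0 a; have := normr_ge0 u; nra.
Qed.

Lemma good_mul {R : realType} n F G : good n F -> good n G ->
  good n (fun x : nat -> R => F x * G x).
Proof.
move=> [[B1 hB1] cF] [[B2 hB2] cG]; split.
  exists (B1 * B2) => x Dx; rewrite normrM.
  have := hB1 x Dx; have := hB2 x Dx; have := normr_ge0 (F x); have := normr_ge0 (G x); nra.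
move=> e e0.
have b1 : 0 < `|B1| + 1 by rewrite ltr_pwDr.
have b2 : 0 < `|B2| + 1 by rewrite ltr_pwDr.
have e2 : 0 < e / 2 by rewrite divr_gt0.
have [d1 d10 h1] := cF (e / 2 / (`|B2| + 1)) (divr_gt0 e2 b2).
have [d2 d20 h2] := cG (e / 2 / (`|B1| + 1)) (divr_gt0 e2 b1).
exists (Num.min d1 d2); first by rewrite lt_min d10 d20.
move=> x y Dx Dy cxy.
have c1 : forall j, (j < n)%N -> `|x j - y j| < d1.
  by move=> j jn; have := cxy j jn; rewrite lt_min => /andP[].
have c2 : forall j, (j < n)%N -> `|x j - y j| < d2.
  by move=> j jn; have := cxy j jn; rewrite lt_min => /andP[].
have := h1 _ _ Dx Dy c1; have := h2 _ _ Dx Dy c2.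
rewrite !ltr_pdivlMr // => hv hu.
have -> : F x * G x - F y * G y = F x * (G x - G y) + G y * (F x - F y) by ring.
apply: (le_lt_trans (ler_normD _ _)); rewrite !normrM.
have fx : `|F x| <= `|B1| by apply: (le_trans (hB1 x Dx)); exact: ler_norm.
have gy : `|G y| <= `|B2| by apply: (le_trans (hB2 y Dy)); exact: ler_norm.
have := normr_ge0 (F x); have := normr_ge0 (G y).
have := normr_ge0 (G x - G y); have := normr_ge0 (F x - F y). 
have := normr_ge0 B1; have := normr_ge0 B2.
nra.
Qed.

Lemma Dn_upd {R : realType} k (t : R) x : Dn k x -> 0 <= t <= 1 -> Dn k.+1 (upd k t x).
Proof.
move=> Dx t01 j; rewrite ltnS leq_eqVlt => /orP[/eqP ->|jk]; rewrite /upd.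
  by rewrite eqxx.
by rewrite (ltn_eqF jk); exact: Dx.
Qed.

Lemma good_upd {R : realType} k (t : R) F : good k.+1 F -> 0 <= t <= 1 ->
  good k (fun x => F (upd k t x)).
Proof.
move=> [[B hB] cF] t01; split.
  by exists B => x Dx; apply: hB; exact: Dn_upd.
move=> e e0; have [d d0 h] := cF e e0; exists d => // x y Dx Dy cxy.
apply: h; try exact: Dn_upd.
move=> j; rewrite ltnS leq_eqVlt => /orP[/eqP ->|jk]; rewrite /upd.
  by rewrite eqxx subrr normr0.
by rewrite (ltn_eqF jk); exact: cxy.
Qed.

Lemma good_sum {R : realType} n (I : Type) (r : seq I) (F : I -> (nat -> R) -> R) :
  (forall i, good n (F i)) -> good n (fun x => \sum_(i <- r) F i x).
Proof.
move=> gF; elim: r => [|a r IH].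
  have -> : (fun x => \sum_(i <- [::]) F i x) = fun _ => 0.
    by apply: funext => x; rewrite big_nil.
  exact: good_cst.
have -> : (fun x => \sum_(i <- a :: r) F i x) =
   fun x => 1 * F a x + \sum_(i <- r) F i x.
  by apply: funext => x; rewrite big_cons mul1r.
exact: good_lin.
Qed.
Lemma cont_of_ed {R : realType} (phi : R -> R) :
  (forall e : R, 0 < e -> exists2 d : R, 0 < d & forall t s, 0 <= t <= 1 -> 0 <= s <= 1 ->
     `|t - s| < d -> `|phi t - phi s| <= e) ->
  {within `[0, 1], continuous phi}.
Proof.
move=> h; apply/subspace_continuousP => x Ax.
apply/cvgrPdist_le => e e0.
have [d d0 hd] := h e e0.
rewrite near_withinE; apply/nbhs_ballP; exists d => //= y; rewrite /ball /= => xy Ay.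
apply: hd => //.
Qed.

Lemma Ileb {R : realType} : fine ((@lebesgue_measure R) `[0, 1]%classic) = 1.
Proof. by rewrite lebesgue_measure_itv /= lte01 oppr0 adde0. Qed.
Lemma I_ext {R : realType} n (F G : (nat -> R) -> R) :
  (forall x, Dn n x -> F x = G x) -> cube_int_seq n F = cube_int_seq n G.
Proof.
elim: n F G => [|k IH] F G h /=; first by apply: h => j.
apply: eq_Rintegral => t; rewrite inE /= in_itv /= => t01.
by apply: IH => x Dx; apply: h; exact: Dn_upd.
Qed.

Lemma I_ge0 {R : realType} n (F : (nat -> R) -> R) :
  (forall x, Dn n x -> 0 <= F x) -> 0 <= cube_int_seq n F.
Proof.
elim: n F => [|k IH] F h /=; first by apply: h => j.
apply: Rintegral_ge0 => t; rewrite /= in_itv /= => t01.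
by apply: IH => x Dx; apply: h; exact: Dn_upd.
Qed.

Lemma I_cst {R : realType} n (c : R) : cube_int_seq n (fun _ => c) = c.
Proof.
elim: n c => [|k IH] c //=.
rewrite IH Rintegral_cst ?Ileb ?mulr1 //.
Qed.

Lemma Dn0 {R : realType} k : Dn k (fun _ => 0 : R).
Proof. by move=> j _; rewrite lexx ler01. Qed.

Lemma I_lin {R : realType} n : forall (F G : (nat -> R) -> R) a, good n F -> good n G ->
  cube_int_seq n (fun x => a * F x + G x) = a * cube_int_seq n F + cube_int_seq n G.
Proof.
elim: n => [|k IH] F G a gF gG //=.
have bnd : forall (H : (nat -> R) -> R) (e : R), good k H -> (forall x, Dn k x -> `|H x| <= e) ->
    `|cube_int_seq k H| <= e.
  move=> H e gH hH.
  have h1 := @I_ge0 R k (fun x => (-1) * H x + e).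
  have h2 := @I_ge0 R k (fun x => 1 * H x + e).
  rewrite IH ?I_cst in h1; [|exact: gH|exact: good_cst].
  rewrite IH ?I_cst in h2; [|exact: gH|exact: good_cst].
  rewrite ler_norml; apply/andP; split.
    suff : 0 <= 1 * cube_int_seq k H + e by lra.
    by apply: h2 => x Dx; have := hH x Dx; rewrite ler_norml; lra.
  suff : 0 <= -1 * cube_int_seq k H + e by lra.
  by apply: h1 => x Dx; have := hH x Dx; rewrite ler_norml; lra.
have cont : forall F : (nat -> R) -> R, good k.+1 F ->
    {within `[0, 1], continuous (fun t => cube_int_seq k (fun x => F (upd k t x)))}.
  move=> F' gF'; apply: cont_of_ed => eps eps0.
  have [d d0 hd] := gF'.2 eps eps0; exists d => // t s t01 s01 ts.
  rewrite (_ : forall u v : R, u - v = -1 * v + u); last by move=> u v; ring.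
  rewrite -IH; try exact: good_upd.
  apply: bnd; first by apply: good_lin; exact: good_upd.
  move=> x Dx; rewrite mulN1r addrC; apply: ltW; apply: hd; try exact: Dn_upd.
  move=> j jk; rewrite /upd; case: eqP => _; first by [].
  by rewrite subrr normr0.
have integ : forall F : (nat -> R) -> R, good k.+1 F -> (@lebesgue_measure R).-integrable `[0, 1]
    (EFin \o (fun t => cube_int_seq k (fun x => F (upd k t x)))).
  move=> F' gF'; apply: continuous_compact_integrable; first exact: segment_compact.
  exact: cont.
transitivity (\int[@lebesgue_measure R]_(t in `[0, 1])
   (a * cube_int_seq k (fun x => F (upd k t x)) + cube_int_seq k (fun x => G (upd k t x)))).
  apply: eq_Rintegral => t; rewrite inE /= in_itv /= => t01.
  by apply: IH; exact: good_upd.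
rewrite RintegralD //.
- by rewrite RintegralZl //; exact: integ.
- have gF' : good k.+1 (fun x => a * F x + 0) by apply: good_lin => //; exact: good_cst.
  apply: (@eq_integrable _ _ _ _ _ _ _ _ _ (integ _ gF')) => // t.
  rewrite inE /= in_itv /= => t01 /=.
  rewrite IH ?I_cst ?addr0 //; [exact: good_upd | exact: good_cst].
- exact: integ.
Qed.

Lemma I_scale {R : realType} n (F : (nat -> R) -> R) a : good n F ->
  cube_int_seq n (fun x => a * F x) = a * cube_int_seq n F.
Proof.
move=> gF; have := @I_lin R n F _ a gF (good_cst n 0); rewrite I_cst addr0 => <-.
by congr cube_int_seq; apply: funext => x; rewrite addr0.
Qed.

Lemma I_add {R : realType} n (F G : (nat -> R) -> R) : good n F -> good n G ->
  cube_int_seq n (fun x => F x + G x) = cube_int_seq n F + cube_int_seq n G.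
Proof.
move=> gF gG; have := @I_lin R n F G 1 gF gG; rewrite mul1r => <-.
by congr cube_int_seq; apply: funext => x; rewrite mul1r.
Qed.

Lemma I_sum {R : realType} n (I : Type) (r : seq I) (F : I -> (nat -> R) -> R) :
  (forall i, good n (F i)) ->
  cube_int_seq n (fun x => \sum_(i <- r) F i x) = \sum_(i <- r) cube_int_seq n (F i).
Proof.
move=> gF; elim: r => [|a r IH].
  rewrite big_nil; transitivity (cube_int_seq n (fun _ : nat -> R => 0 : R)); last exact: I_cst.
  by congr cube_int_seq; apply: funext => x; rewrite big_nil.
rewrite big_cons -IH -I_add //; last exact: good_sum.
by congr cube_int_seq; apply: funext => x; rewrite big_cons.
Qed.

Lemma I1_onem {R : realType} m :
  cube_int_seq 1 (fun x : nat -> R => (1 - x 0%N) ^+ m) = m.+1%:R^-1.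
Proof. rewrite /= -Rintegral_onemXn. apply: eq_Rintegral => t _ /=. by []. Qed.

Lemma good_onem {R : realType} n m : (0 < n)%N ->
  good n (fun x : nat -> R => (1 - x 0%N) ^+ m).
Proof.
move=> n0; elim: m => [|m IH].
  have -> : (fun x : nat -> R => (1 - x 0%N) ^+ 0) = fun _ => 1.
    by apply: funext => x; rewrite expr0.
  exact: good_cst.
have -> : (fun x : nat -> R => (1 - x 0%N) ^+ m.+1) =
    fun x => ((-1) * x 0%N + 1) * (1 - x 0%N) ^+ m.
  by apply: funext => x; rewrite exprS mulN1r addrC.
apply: good_mul => //; apply: good_lin; [exact: good_coord|exact: good_cst].
Qed.

Lemma I1_mean {R : realType} : cube_int_seq 1 (fun x : nat -> R => x 0%N - 2^-1) = 0.
Proof.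
have -> : (fun x : nat -> R => x 0%N - 2^-1) =
   fun x => (-1) * (1 - x 0%N) ^+ 1 + 2^-1.
  by apply: funext => x; rewrite expr1; field.
rewrite I_lin ?I1_onem ?I_cst; [|exact: good_onem|exact: good_cst].
by rewrite mulN1r addrC subrr.
Qed.

Lemma I1_var {R : realType} :
  cube_int_seq 1 (fun x : nat -> R => (x 0%N - 2^-1) ^+ 2) = 12^-1.
Proof.
have -> : (fun x : nat -> R => (x 0%N - 2^-1) ^+ 2) =
   fun x => 1 * (1 - x 0%N) ^+ 2 + ((-1) * (1 - x 0%N) ^+ 1 + 4^-1).
  by apply: funext => x; rewrite !expr2 expr1; field.
rewrite I_lin ?I_lin ?I1_onem ?I_cst; try exact: good_onem; try exact: good_cst.
  by field.
apply: good_lin; [exact: good_onem|exact: good_cst].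
Qed.

Lemma I1E {R : realType} (h : R -> R) :
  \int[@lebesgue_measure R]_(t in `[0, 1]) h t = cube_int_seq 1 (fun x => h (x 0%N)).
Proof. by []. Qed.

Lemma good_u {R : realType} n j : (j < n)%N -> good n (fun x : nat -> R => x j - 2^-1).
Proof.
move=> jn; have := @good_lin R n 1 _ _ (@good_coord R n j jn) (good_cst n (- 2^-1)).
by congr good; apply: funext => x; rewrite mul1r.
Qed.

Lemma upd_comm {R : realType} j k (s t : R) x : j != k ->
  upd k t (upd j s x) = upd j s (upd k t x).
Proof.
move=> jk; apply: funext => i; rewrite /upd.
case: (eqVneq i k) => [->|ik]; last by [].
by rewrite eq_sym (negbTE jk).
Qed.

Lemma I_indep {R : realType} n j (G : (nat -> R) -> R) : (j < n)%N -> good n G ->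
  (forall x s, G (upd j s x) = G x) ->
  cube_int_seq n (fun x => (x j - 2^-1) * G x) = 0.
Proof.
elim: n j G => [|k IH] j G // jn gG hG /=.
case: (ltngtP j k) => [jk|kj|jk].
- transitivity (\int[@lebesgue_measure R]_(t in `[0, 1]) (0 : R)); last first.
    by rewrite Rintegral_cst ?mul0r.
  apply: eq_Rintegral => t; rewrite inE /= in_itv /= => t01.
  transitivity (cube_int_seq k (fun x => (x j - 2^-1) * G (upd k t x))).
    by congr cube_int_seq; apply: funext => x; rewrite (ltn_eqF jk).
  apply: IH => //; first exact: good_upd.
  move=> x s; rewrite upd_comm; first exact: hG.
  by rewrite neq_ltn jk.
- by move: jn; rewrite ltnS leqNgt kj.
- subst j.
  have gG0 : good k G.
    have := @good_upd R k 0 G gG; rewrite lexx ler01 => /(_ isT).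
    by congr good; apply: funext => x; rewrite hG.
  transitivity (\int[@lebesgue_measure R]_(t in `[0, 1])
                  ((t - 2^-1) * cube_int_seq k G)).
    apply: eq_Rintegral => t; rewrite inE /= in_itv /= => t01.
    rewrite -I_scale //; congr cube_int_seq; apply: funext => x.
    by congr (_ * _); apply: (hG x t).
  rewrite I1E.
  transitivity (cube_int_seq 1 (fun x => cube_int_seq k G * (x 0%N - 2^-1))).
    by congr cube_int_seq; apply: funext => x; rewrite mulrC.
  by rewrite I_scale ?I1_mean ?mulr0 //; exact: good_u.
Qed.

Lemma I_sq {R : realType} n j : (j < n)%N ->
  cube_int_seq n (fun x : nat -> R => (x j - 2^-1) ^+ 2) = 12^-1.
Proof.
elim: n j => [|k IH] j // jn /=.
case: (ltngtP j k) => [jk|kj|jk].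
- by rewrite IH // Rintegral_cst ?Ileb ?mulr1.
- by move: jn; rewrite ltnS leqNgt kj.
- subst j; rewrite -I1_var.
  apply: eq_Rintegral => t _.
  by rewrite eqxx I_cst.
Qed.

Lemma good_ui {R : realType} n (i : 'I_n) : good n (fun x : nat -> R => x i - 2^-1).
Proof. exact: good_u. Qed.

Lemma good_scale {R : realType} n a (F : (nat -> R) -> R) : good n F -> good n (fun x => a * F x).
Proof.
move=> gF; have := @good_lin R n a F _ gF (good_cst n 0).
by congr good; apply: funext => x; rewrite addr0.
Qed.

Lemma good_add {R : realType} n (F G : (nat -> R) -> R) : good n F -> good n G ->
  good n (fun x => F x + G x).
Proof.
move=> gF gG; have := @good_lin R n 1 F G gF gG.
by congr good; apply: funext => x; rewrite mul1r.
Qed.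

Arguments good_add {R n F G}.
Arguments I_add {R n F G}.
Arguments I_scale {R n F} a.
Arguments good_mul {R n F G}.

Lemma good_S {R : realType} n (b : 'I_n -> R) :
  good n (fun x => \sum_(i < n) b i * (x i - 2^-1)).
Proof. apply: good_sum => i; apply: good_scale; exact: good_ui. Qed.

Lemma I_S {R : realType} n (b : 'I_n -> R) (h : (nat -> R) -> R) : good n h ->
  cube_int_seq n (fun x => (\sum_(i < n) b i * (x i - 2^-1)) * h x) =
  \sum_(i < n) b i * cube_int_seq n (fun x => (x i - 2^-1) * h x).
Proof.
move=> gh.
transitivity (cube_int_seq n (fun x => \sum_(i < n) b i * ((x i - 2^-1) * h x))).
  by congr cube_int_seq; apply: funext => x; rewrite mulr_suml;
     apply: eq_bigr => i _; rewrite mulrA.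
rewrite I_sum; last by move=> i; apply: good_scale; apply: good_mul => //; exact: good_ui.
by apply: eq_bigr => i _; rewrite I_scale //; apply: good_mul => //; exact: good_ui.
Qed.

Lemma I_uu {R : realType} n (i j : 'I_n) :
  cube_int_seq n (fun x : nat -> R => (x i - 2^-1) * (x j - 2^-1)) =
  (i == j)%:R / 12.
Proof.
case: (eqVneq i j) => [<-|ij].
  rewrite mul1r -(@I_sq R n i (ltn_ord i)); congr cube_int_seq; apply: funext => x.
rewrite mul0r; apply: I_indep => //; first exact: good_ui.
move=> x s; rewrite /upd.
by have -> : (nat_of_ord j == nat_of_ord i) = false by apply/negbTE; rewrite eq_sym.
Qed.

Lemma I_expand {R : realType} n (g : (nat -> R) -> R) (d0 : R) (b : 'I_n -> R) :
  good n g ->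
  cube_int_seq n (fun x => (g x - d0 - \sum_(i < n) b i * (x i - 2^-1)) ^+ 2) =
  cube_int_seq n (fun x => g x ^+ 2) - 2 * d0 * cube_int_seq n g
  - 2 * (\sum_(i < n) b i * cube_int_seq n (fun x => (x i - 2^-1) * g x))
  + d0 ^+ 2 + \sum_(i < n) b i ^+ 2 / 12.
Proof.
move=> gg.
set S := fun x : nat -> R => \sum_(i < n) b i * (x i - 2^-1).
have gS : good n S by exact: good_S.
transitivity (cube_int_seq n (fun x =>
   g x ^+ 2 + ((-2 * d0) * g x + ((-2) * (S x * g x) + (d0 ^+ 2 +
   ((2 * d0) * (S x * 1) + S x * S x)))))).
  by congr cube_int_seq; apply: funext => x; rewrite /S; ring.
have g2 : good n (fun x => g x ^+ 2).
  have := good_mul gg gg; congr good; apply: funext => x; by rewrite expr2.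
have gA : good n (fun x => -2 * d0 * g x) by exact: good_scale.
have gSg : good n (fun x => S x * g x) by exact: good_mul.
have gB : good n (fun x => -2 * (S x * g x)) by exact: good_scale.
have gC : good n (fun _ : nat -> R => d0 ^+ 2) by exact: good_cst.
have gS1 : good n (fun x => S x * 1) by apply: good_mul => //; exact: good_cst.
have gD : good n (fun x => 2 * d0 * (S x * 1)) by exact: good_scale.
have gE : good n (fun x => S x * S x) by exact: good_mul.
have gDE := good_add gD gE.
have gCDE := good_add gC gDE.
have gBCDE := good_add gB gCDE.
have gABCDE := good_add gA gBCDE.
rewrite (I_add g2 gABCDE) (I_add gA gBCDE) (I_add gB gCDE) (I_add gC gDE) (I_add gD gE).
rewrite I_cst (I_scale _ gg) (I_scale _ gSg) (I_scale _ gS1).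
rewrite /S I_S ?I_S //; last exact: good_cst.
have -> : \sum_(i < n) b i * cube_int_seq n (fun x => (x i - 2^-1) * 1) = 0.
  rewrite big1 // => i _; rewrite I_indep ?mulr0 //; first exact: good_cst.
have -> : \sum_(i < n) b i * cube_int_seq n (fun x => (x i - 2^-1) * S x) =
          \sum_(i < n) b i ^+ 2 / 12.
  apply: eq_bigr => i _.
  transitivity (b i * cube_int_seq n (fun x => S x * (x i - 2^-1))).
    by congr (_ * _); congr cube_int_seq; apply: funext => x; rewrite mulrC.
  rewrite /S I_S; last exact: good_ui.
  rewrite (bigD1 i) //= big1 ?addr0 => [|j ji]; last first.
    by rewrite I_uu (negbTE ji) mul0r mulr0.
  by rewrite I_uu eqxx mul1r expr2 mulrA.
ring.
Qed.

Lemma rV_norm_lt {R : realType} m (v : 'rV[R]_m) (d : R) : 0 < d ->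
  (forall i, `|v ord0 i| < d) -> `|v| < d.
Proof.
move=> d0 h; have -> : `|v| = mx_norm v by [].
rewrite mx_normrE.
apply: bigmax_lt => // -[i j] _ /=; rewrite (ord1 i); exact: h.
Qed.

Lemma cube_compact {R : realType} m : compact (cube m : set 'rV[R]_m).
Proof.
have := @rV_compact R^o m (fun _ => `[0, 1]%classic) (fun _ => @segment_compact R 0 1).
by congr compact.
Qed.

Lemma heine {R : realType} m (h : 'rV[R]_m -> R) : {within cube m, continuous h} ->
  forall e : R, 0 < e -> exists2 d : R, 0 < d & forall v w, cube m v -> cube m w ->
    `|v - w| < d -> `|h v - h w| < e.
Proof.
move=> hc e e0.
have e2 : 0 < e / 2 by rewrite divr_gt0.
have := (compact_near_coveringP (cube m)).1 (@cube_compact R m) R (0 : R)^'+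
  (fun d v => cube m v -> forall w, cube m w -> `|v - w| < d -> `|h v - h w| < e) _.
case.
  move=> x Kx.
  have := (subspace_continuousP _ _).1 hc x Kx.
  move/cvgrPdist_lt => /(_ _ e2); rewrite near_withinE => /nbhs_ballP [r r0 hr].
  have r2 : 0 < r / 2 by rewrite divr_gt0.
  exists (ball x (r / 2), [set d : R | d < r / 2]) => /=.
    split; first exact: nbhsx_ballx.
    exists (r / 2) => //= d; rewrite /ball /= sub0r normrN => hd d0.
    by rewrite gtr0_norm in hd.
  case => y d /= [yx dr] Ky w Kw yw.
  rewrite -ball_normE /ball_ /= in yx.
  have hy := hr y; have hw := hr w.
  rewrite -ball_normE /ball_ /= in hy hw.
  have r0' : 0 < r by [].
  have xy : `|x - y| < r by lra.
  have xw : `|x - w| < r.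
    have := ler_distD y x w; lra.
  have := hy xy Ky; have := hw xw Kw; rewrite /from_subspace /= => h1 h2.
  have := ler_distD (h x) (h y) (h w); rewrite distrC in h2; lra.
move=> d d0 hd.
have d2 : 0 < d / 2 by rewrite divr_gt0.
exists (d / 2) => // v w Kv Kw vw.
apply: (hd (d / 2)) => //.
rewrite /ball /= sub0r normrN gtr0_norm //.
rewrite ltr_pdivrMr //; have d0' : 0 < d by []; lra.
Qed.

Lemma row_cube {R : realType} m (x : nat -> R) : Dn m x ->
  cube m (\row_(i < m) x (nat_of_ord i)).
Proof. by move=> Dx i; rewrite mxE; exact: Dx. Qed.

Lemma good_of_cont {R : realType} m (h : 'rV[R]_m -> R) :
  {within cube m, continuous h} ->
  good m (fun x => h (\row_(i < m) x (nat_of_ord i))).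
Proof.
move=> hc; split.
  have /compact_bounded[M [_ mrt]] := continuous_compact hc (@cube_compact R m).
  exists (M + 1) => x Dx; apply: (mrt (M + 1)); first by rewrite ltrDl.
  by exists (\row_(i < m) x (nat_of_ord i)) => //; exact: row_cube.
move=> e e0; have [d d0 hd] := @heine R m h hc e e0.
exists d => // x y Dx Dy cxy; apply: hd; try exact: row_cube.
apply: rV_norm_lt => // i; rewrite !mxE; exact: cxy.
Qed.

Lemma good_mono {R : realType} m n (F : (nat -> R) -> R) : (m <= n)%N -> good m F -> good n F.
Proof.
move=> mn [[B hB] cF]; have Dmn : forall x : nat -> R, Dn n x -> Dn m x.
  by move=> x Dx j jm; exact: (Dx j (leq_trans jm mn)).
split; first by exists B => x Dx; apply: hB; exact: Dmn.
move=> e e0; have [d d0 hd] := cF e e0; exists d => // x y Dx Dy cxy.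
apply: hd; try exact: Dmn.
by move=> j jm; apply: cxy; exact: leq_trans jm mn.
Qed.

Lemma LB {R : realType} n (Q m d0 : R) (w cv : 'I_n -> R) (A : pred 'I_n) :
  (forall i, ~~ A i -> w i = 0) ->
  Q - m ^+ 2 - \sum_(i < n) (if A i then 12 * cv i ^+ 2 else 0) <=
  Q - 2 * d0 * m - 2 * (\sum_(i < n) w i * cv i) + d0 ^+ 2 + \sum_(i < n) w i ^+ 2 / 12.
Proof.
move=> wA.
have h : - \sum_(i < n) (if A i then 12 * cv i ^+ 2 else 0) <=
         \sum_(i < n) (w i ^+ 2 / 12 - 2 * (w i * cv i)).
  rewrite -sumrN; apply: ler_sum => i _; case: (boolP (A i)) => Ai.
    rewrite -subr_ge0.
    have -> : w i ^+ 2 / 12 - 2 * (w i * cv i) - - (12 * cv i ^+ 2) =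
              (w i - 12 * cv i) ^+ 2 / 12 by field.
    by rewrite divr_ge0 // sqr_ge0.
  by rewrite wA // expr2 !mul0r mulr0 subrr oppr0.
rewrite sumrB -mulr_sumr -mulr_suml in h.
have := sqr_ge0 (d0 - m); rewrite !expr2 in h * => h2.
have e : \sum_(i < n) w i ^+ 2 / 12 = (\sum_(i < n) w i ^+ 2) / 12 by rewrite mulr_suml.
rewrite e; nra.
Qed.

Lemma EQv {R : realType} n (Q m : R) (cv : 'I_n -> R) (A : pred 'I_n) :
  let w := fun i => if A i then 12 * cv i else 0 in
  Q - 2 * m * m - 2 * (\sum_(i < n) w i * cv i) + m ^+ 2 + \sum_(i < n) w i ^+ 2 / 12 =
  Q - m ^+ 2 - \sum_(i < n) (if A i then 12 * cv i ^+ 2 else 0).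
Proof.
move=> w.
have h1 : \sum_(i < n) w i * cv i = \sum_(i < n) (if A i then 12 * cv i ^+ 2 else 0).
  by apply: eq_bigr => i _; rewrite /w; case: (A i); rewrite ?mul0r // expr2 mulrA.
have h2 : \sum_(i < n) w i ^+ 2 / 12 = \sum_(i < n) (if A i then 12 * cv i ^+ 2 else 0).
  apply: eq_bigr => i _; rewrite /w; case: (A i); last by rewrite expr2 !mul0r.
  by rewrite !expr2; field.
rewrite h1 h2; ring.
Qed.

Theorem lemma7 (R : realType) (p p0 M : nat)
  (Hp0 : (1 <= p0)%N) (Hp : (p0 < p)%N) (HM0 : (p0 <= M)%N) (HM : (M <= p)%N)
  (f : 'rV[R]_p -> R) (ft : 'rV[R]_p0 -> R) (eta tau : R) :
  {within cube p, continuous f} ->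
  {within cube p0, continuous ft} ->
  0 < eta ->
  (exists e : R, e < eta /\
     forall x, cube p x ->
       `| f x - ft (\row_(i < p0) x ord0 (widen_ord (ltnW Hp) i)) | <= e) ->
  0 < tau ->
  (forall j : 'I_p, (j < p0)%N ->
     tau < `| cube_int (fun x => x ord0 j * f x) - 2^-1 * cube_int f |) ->
  forall (A1 : {set 'I_p}), #|A1| = M ->
  ~~ ((Zset p p0) \subset A1) ->
  forall (b0 : R) (b : 'rV[R]_p) (c0 : R) (c : 'rV[R]_p),
    ls_fit f A1 b0 b ->
    ls_fit f (Zset p p0) c0 c ->
    ls_loss f b0 b - ls_loss f c0 c >=
      12 * tau ^+ 2 - 12 * (M - p0 + 1)%:R * eta ^+ 2.
Proof.
move=> fc ftc eta0 [e [e_eta he]] tau0 htau A1 cardA1 nsub b0 b c0 c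
  [bsupp bmin] [csupp cmin].
pose F := fun x : nat -> R => f (\row_(i < p) x (nat_of_ord i)).
have gF : good p F := @good_of_cont R p f fc.
pose G := fun x : nat -> R => ft (\row_(i < p0) x (nat_of_ord i)).
have gG : good p G := @good_mono R p0 p _ (ltnW Hp) (@good_of_cont R p0 ft ftc).
have FG : forall x, Dn p x -> `|F x - G x| <= e.
  move=> x Dx; have := he _ (@row_cube R p x Dx); rewrite /F /G.
  suff -> : (\row_(i < p0) (\row_(i < p) x (nat_of_ord i)) ord0 (widen_ord (ltnW Hp) i))
     = \row_(i < p0) x (nat_of_ord i) by [].
  by apply/rowP => i; rewrite !mxE.
have e0 : 0 <= e by apply: le_trans (FG _ (Dn0 p)).
pose H := fun x => F x - G x.
have gH : good p H.
  have := @good_lin R p (-1) G F gG gF; congr good; apply: funext => x; rewrite /H; ring.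
have Gind : forall j, (p0 <= j)%N -> forall x s, G (upd j s x) = G x.
  move=> j pj x s; rewrite /G; congr ft; apply/rowP => i; rewrite !mxE /upd.
  by have -> : (nat_of_ord i == j) = false by apply: ltn_eqF; exact: leq_trans (ltn_ord i) pj.
pose Q := cube_int_seq p (fun x => F x ^+ 2).
pose m := cube_int_seq p F.
pose cv := fun i : 'I_p => cube_int_seq p (fun x => (x i - 2^-1) * F x).
pose Lf := fun (d0 : R) (w : 'I_p -> R) => Q - 2 * d0 * m - 2 * (\sum_(i < p) w i * cv i)
   + d0 ^+ 2 + \sum_(i < p) w i ^+ 2 / 12.
have LE : forall (c0 : R) (c : 'rV_p), ls_loss f c0 c =
    Lf (c0 + 2^-1 * \sum_(i < p) c ord0 i) (fun i => c ord0 i).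
  move=> a0 a; rewrite /Lf -I_expand //; rewrite /ls_loss /cube_int.
  congr cube_int_seq; apply: funext => x.
  under eq_bigr do rewrite mxE.
  have -> : \sum_(i < p) a ord0 i * x i =
     \sum_(i < p) a ord0 i * (x i - 2^-1) + 2^-1 * \sum_(i < p) a ord0 i.
    rewrite mulr_sumr -big_split; apply: eq_bigr => i _ /=; ring.
  rewrite /F; ring.
have cvtau : forall j : 'I_p, (j < p0)%N -> tau < `|cv j|.
  move=> j jp; have := htau j jp; congr (_ < `|_|).
  rewrite /cv /cube_int.
  have gxF : good p (fun x : nat -> R => x j * F x) by apply: good_mul => //; exact: good_coord.
  have h := @I_lin R p F _ (- 2^-1) gF gxF; rewrite mulNr addrC in h.
  transitivity (cube_int_seq p (fun x => x j * F x) - 2^-1 * cube_int_seq p F).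
    congr (_ - _ * _); congr cube_int_seq; apply: funext => x; by rewrite /F mxE.
  rewrite -h; congr cube_int_seq; apply: funext => x; ring.
pose a := fun i : 'I_p => cube_int_seq p (fun x => (x i - 2^-1) * H x).
have cva : forall i : 'I_p, (p0 <= i)%N -> cv i = a i.
  move=> i pi; rewrite /cv /a.
  have gu := @good_ui R p i.
  have -> : (fun x : nat -> R => (x i - 2^-1) * F x) =
      (fun x => (x i - 2^-1) * H x + (x i - 2^-1) * G x).
    by apply: funext => x; rewrite /H; ring.
  rewrite I_add; [|exact: good_mul|exact: good_mul].
  by rewrite (@I_indep R p i G (ltn_ord i) gG (Gind i pi)) addr0.
have EQ1 : forall (v : 'I_p -> R) (A : pred 'I_p),
    \sum_(i < p) (if A i then 12 * v i else 0) * v i =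
    \sum_(i < p) (if A i then 12 * v i ^+ 2 else 0).
  by move=> v A; apply: eq_bigr => i _; case: (A i); rewrite ?mul0r // expr2 mulrA.
have EQ2 : forall (v : 'I_p -> R) (A : pred 'I_p),
    \sum_(i < p) (if A i then 12 * v i else 0) ^+ 2 / 12 =
    \sum_(i < p) (if A i then 12 * v i ^+ 2 else 0).
  move=> v A; apply: eq_bigr => i _; case: (A i); last by rewrite expr2 !mul0r.
  by rewrite !expr2; field.
pose B1 : pred 'I_p := fun i => (i \in A1) && ~~ (i \in Zset p p0).
have bessel : \sum_(i < p) (if B1 i then 12 * cv i ^+ 2 else 0) <= e ^+ 2.
  have -> : \sum_(i < p) (if B1 i then 12 * cv i ^+ 2 else 0) =
            \sum_(i < p) (if B1 i then 12 * a i ^+ 2 else 0).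
    apply: eq_bigr => i _; rewrite /B1.
    case: (boolP (i \in Zset p p0)) => iz; rewrite ?andbF ?andbT //.
    rewrite cva //; move: iz; rewrite /Zset inE; by rewrite -leqNgt.
  pose w := fun i : 'I_p => if B1 i then 12 * a i else 0.
  have h0 := @I_ge0 R p (fun x => (H x - 0 - \sum_(i < p) w i * (x i - 2^-1)) ^+ 2)
    (fun x _ => sqr_ge0 _).
  rewrite I_expand // EQ1 EQ2 in h0.
  have hH2 : cube_int_seq p (fun x => H x ^+ 2) <= e ^+ 2.
    have gH2 : good p (fun x => H x ^+ 2).
      have := good_mul gH gH; congr good; apply: funext => x; by rewrite expr2.
    have h := @I_ge0 R p (fun x => (-1) * (H x ^+ 2) + e ^+ 2).
    rewrite I_lin ?I_cst // in h; last exact: good_cst.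
    suff : 0 <= -1 * cube_int_seq p (fun x => H x ^+ 2) + e ^+ 2 by lra.
    apply: h => x Dx; have := FG x Dx; rewrite -/(H x) => hx.
    suff : H x ^+ 2 <= e ^+ 2 by lra.
    by rewrite -real_normK ?num_real // lerXn2r // ?nnegrE.
  lra.
have lowb : Q - m ^+ 2 - \sum_(i < p) (if i \in A1 then 12 * cv i ^+ 2 else 0)
    <= ls_loss f b0 b.
  rewrite LE /Lf; apply: (@LB R p Q m _ (fun i => b ord0 i) cv (fun i => i \in A1)).
  exact: bsupp.
pose cs := \row_(i < p) (if i \in Zset p p0 then 12 * cv i else 0).
have upc : ls_loss f c0 c <=
    Q - m ^+ 2 - \sum_(i < p) (if i \in Zset p p0 then 12 * cv i ^+ 2 else 0).
  apply: (le_trans (cmin (m - 2^-1 * \sum_(i < p) cs ord0 i) cs _)).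
    by move=> i /negbTE h; rewrite mxE h.
  rewrite LE (_ : m - 2^-1 * \sum_(i < p) cs ord0 i + 2^-1 * \sum_(i < p) cs ord0 i = m);
    last by ring.
  have -> : (fun i => cs ord0 i) = (fun i => if i \in Zset p p0 then 12 * cv i else 0).
    by apply: funext => i; rewrite mxE.
  rewrite /Lf.
  by rewrite (@EQv R p Q m cv (fun i => i \in Zset p p0)).
have [j0 j0Z j0A1] : exists2 j, j \in Zset p p0 & j \notin A1 by apply/subsetPn.
have j0p0 : (j0 < p0)%N by move: j0Z; rewrite /Zset inE.
have comb : 12 * cv j0 ^+ 2 - \sum_(i < p) (if B1 i then 12 * cv i ^+ 2 else 0) <=
   \sum_(i < p) (if i \in Zset p p0 then 12 * cv i ^+ 2 else 0) -
   \sum_(i < p) (if i \in A1 then 12 * cv i ^+ 2 else 0).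
  have -> : 12 * cv j0 ^+ 2 = \sum_(i < p) (if i == j0 then 12 * cv i ^+ 2 else 0).
    by rewrite -big_mkcond big_pred1_eq.
  rewrite -!sumrB; apply: ler_sum => i _.
  have X0 : 0 <= 12 * cv i ^+ 2 by rewrite mulr_ge0 // sqr_ge0.
  rewrite /B1; case: (eqVneq i j0) => [->|ij0].
    by rewrite j0Z (negbTE j0A1) /= subr0.
  case: (i \in Zset p p0); case: (i \in A1) => /=; lra.
have tj : tau ^+ 2 < cv j0 ^+ 2.
  have h := cvtau j0 j0p0.
  have -> : cv j0 ^+ 2 = `|cv j0| ^+ 2 by rewrite real_normK // num_real.
  have := normr_ge0 (cv j0); rewrite !expr2; nra.
have Mk : 1 <= (M - p0 + 1)%:R :> R by rewrite ler1n addn1.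
have ee : e ^+ 2 <= eta ^+ 2 by rewrite lerXn2r // ?nnegrE ?ltW // (le_lt_trans e0).
have eta2 : 0 <= eta ^+ 2 by rewrite sqr_ge0.
nra.
Qed.
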